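(* Let $A\in\mathbb{C}^{m\times n}$ have rank $r$ with $\mathrm{rank}(AA^{\sim})=r>0$, and let $A=BC$ be a full rank factorization of $A$, where $B\in\mathbb{C}^{m\times r}$ and $C\in\mathbb{C}^{r\times n}$ both have rank $r$. Then $$A\{1,2,4^{\mathfrak{m}}\}=\left\{C^{\sim}(CC^{\sim})^{-1}B_L^{-1} : B_L^{-1}\in\mathbb{C}^{r\times m} \text{ is a left inverse of } B\right\}.$$
   Context: For a positive integer $k$, the Minkowski metric matrix of order $k$ is $G_k=\mathrm{diag}(1,-I_{k-1})$ (with $G_1=(1)$). For $A\in\mathbb{C}^{m\times n}$, the Minkowski adjoint is $A^{\sim}=G_nA^*G_m$, where $A^*$ is the conjugate transpose. For $A\in\mathbb{C}^{m\times n}$ and $X\in\mathbb{C}^{n\times m}$ consider the equations $(1)\ AXA=A$, $(2)\ XAX=X$, $(3^{\mathfrak{m}})\ (AX)^{\sim}=AX$, $(4^{\mathfrak{m}})\ (XA)^{\sim}=XA$; $A\{i,\dots,k\}$ denotes the set of all $X$ satisfying the listed equations. A left inverse of $B$ is a matrix $B_L^{-1}$ with $B_L^{-1}B=I_r$. *)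

(* Defs.v *)
From HB Require Import structures.
From mathcomp Require Import all_boot all_order all_algebra.
From mathcomp Require Import complex.
From mathcomp Require Import Rstruct.
Set Implicit Arguments. Unset Strict Implicit. Unset Printing Implicit Defensive.
Import Order.TTheory GRing.Theory Num.Theory.
Local Open Scope ring_scope.

Definition CC : Type := complex Rdefinitions.R.
Definition CC_numClosed : numClosedFieldType := complex Rdefinitions.R.

Definition minkG (k : nat) : 'M[CC_numClosed]_k :=
  \matrix_(i < k, j < k)
    (if i == j then (if (i : nat) == 0%N then 1 else -1) else 0).

Definition ctrmx (m n : nat) (A : 'M[CC_numClosed]_(m, n)) : 'M[CC_numClosed]_(n, m) :=
  map_mx (fun z => z^*) A^T.

(* Minkowski adjoint A~ = G_n A^* G_m for A of size m x n. *)
Definition madj (m n : nat) (A : 'M[CC_numClosed]_(m, n)) : 'M[CC_numClosed]_(n, m) :=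
  minkG n *m ctrmx A *m minkG m.

Definition in_A124m (m n : nat) (A : 'M[CC_numClosed]_(m, n)) (X : 'M[CC_numClosed]_(n, m)) : Prop :=
  [/\ A *m X *m A = A, X *m A *m X = X & madj (X *m A) = X *m A].

(* Main.v *)
Require Import Defs.
From mathcomp Require Import all_boot all_order all_algebra.
Set Implicit Arguments. Unset Strict Implicit. Unset Printing Implicit Defensive.
Import Order.TTheory GRing.Theory Num.Theory.
Local Open Scope ring_scope.

Lemma minkGG k : minkG k *m minkG k = 1%:M.
Proof.
apply/matrixP=> i j; rewrite !mxE (bigD1 i) //=.
have -> : \sum_(i0 < k | i0 != i) minkG k i i0 * minkG k i0 j = 0.
  by apply: big1 => k0 /negbTE nk; rewrite !mxE eq_sym nk mul0r.
rewrite addr0 !mxE eqxx.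
have [->|ne] := eqVneq i j.
  by case: ((j : nat) == 0%N); rewrite ?mulr1 ?mulrNN ?mulr1.
by rewrite mulr0.
Qed.

Lemma ctrmxM m n p (X : 'M[CC_numClosed]_(m, n)) (Y : 'M[CC_numClosed]_(n, p)) :
  ctrmx (X *m Y) = ctrmx Y *m ctrmx X.
Proof.
rewrite /ctrmx trmx_mul.
exact: (map_mxM (@Num.conj_op CC_numClosed) Y^T X^T).
Qed.

Lemma ctrmx1 k : ctrmx (1%:M : 'M[CC_numClosed]_k) = 1%:M.
Proof.
apply/matrixP=> i j; rewrite !mxE eq_sym; case: (i == j); by rewrite ?conjC1 ?conjC0.
Qed.

Lemma ctrmxK m n (X : 'M[CC_numClosed]_(m, n)) : ctrmx (ctrmx X) = X.
Proof. by apply/matrixP=> i j; rewrite !mxE conjCK. Qed.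

Lemma madjM m n p (X : 'M[CC_numClosed]_(m, n)) (Y : 'M[CC_numClosed]_(n, p)) :
  madj (X *m Y) = madj Y *m madj X.
Proof.
rewrite /madj ctrmxM !mulmxA; congr (_ *m _); congr (_ *m _).
by rewrite -!mulmxA minkGG mulmx1.
Qed.

Lemma madjK m n (X : 'M[CC_numClosed]_(m, n)) : madj (madj X) = X.
Proof.
rewrite /madj !ctrmxM ctrmxK.
have h k : ctrmx (minkG k) = minkG k.
  apply/matrixP=> i j; rewrite !mxE.
  have [->|_] := eqVneq j i; last by rewrite conjC0.
  by case: ifP => _; rewrite ?rmorph1 ?rmorphN ?rmorph1.
rewrite !h !mulmxA minkGG mul1mx -mulmxA minkGG mulmx1 //.
Qed.

Lemma madj1 k : madj (1%:M : 'M[CC_numClosed]_k) = 1%:M.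
Proof. by rewrite /madj ctrmx1 mulmx1 minkGG. Qed.

Theorem theorem4p7 (m n r : nat)
  (A : 'M[CC_numClosed]_(m, n)) (B : 'M[CC_numClosed]_(m, r)) (C : 'M[CC_numClosed]_(r, n)) :
  (0 < r)%N ->
  \rank A = r ->
  \rank (A *m madj A) = r ->
  \rank B = r -> \rank C = r ->
  A = B *m C ->
  forall X : 'M[CC_numClosed]_(n, m),
    in_A124m A X <->
    exists BL : 'M[CC_numClosed]_(r, m),
      BL *m B = 1%:M /\ X = madj C *m invmx (C *m madj C) *m BL.
Proof.
move=> _ _ rAA rB rC eA X.
set K := C *m madj C.
have Ku : K \in unitmx.
  rewrite -row_free_unit /row_free eqn_leq rank_leq_row /= -{1}rAA eA madjM.
  rewrite (mulmxA (B *m C) (madj C) (madj B)) -(mulmxA B C (madj C)) -/K.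
  apply: leq_trans (mxrankM_maxl _ _) _; exact: mxrankM_maxr.
have Kadj : madj K = K by rewrite /K madjM madjK.
have KVadj : madj (invmx K) = invmx K.
  have : madj (invmx K) *m K = 1%:M by rewrite -{2}Kadj -madjM mulmxV // madj1.
  by move=> h; rewrite -[madj _]mulmx1 -(mulmxV Ku) mulmxA h mul1mx.
have Binj : row_full B by rewrite /row_full rB.
have Cinj : row_free C by rewrite /row_free rC.
split.
- case=> h1 h2 h4.
  have CXB : C *m X *m B = 1%:M.
    apply: (row_free_inj Cinj); rewrite mul1mx.
    apply: (row_full_inj Binj); rewrite !mulmxA -eA.
    by rewrite -(mulmxA (A *m X)) -eA h1.
  exists (C *m X); split => //.
  have CP : C *m (X *m A) = C by rewrite eA !mulmxA CXB mul1mx.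
  have P : X *m A = madj C *m invmx K *m C.
    rewrite -h4 eA mulmxA madjM.
    have e : K *m madj (X *m B) = C by rewrite /K -mulmxA -madjM -mulmxA -eA h4 CP.
    by rewrite -mulmxA; congr (_ *m _); rewrite -e mulKmx.
  by rewrite -{1}h2 P mulmxA.
- case=> BL [hB ->]; rewrite /in_A124m eA.
  have XA : madj C *m invmx K *m BL *m (B *m C) = madj C *m invmx K *m C.
    by rewrite mulmxA -(mulmxA _ BL) hB mulmx1.
  have CY : C *m (madj C *m invmx K) = 1%:M by rewrite mulmxA -/K mulmxV.
  split.
  + by rewrite -mulmxA XA -mulmxA (mulmxA C) CY mul1mx.
  + by rewrite XA -mulmxA (mulmxA C) CY mul1mx.
  + by rewrite XA madjM (madjM (madj C)) madjK KVadj mulmxA.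
Qed.
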